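(* Let $(Y,S,\gamma)$ be a machine with $Y,S$ finite sets such that $\gamma(y'\mid y,s)>0$ for all $y,y'\in Y$ and $s\in S$. Then for every finite set $H$ and every consistent Bayesian filtering interpretation $(H,\psi_H,\kappa)$ of $\gamma$, the interpretation map is constant: $\psi_H(\cdot\mid y)=\psi_H(\cdot\mid y')$ for all $y,y'\in Y$.
   Context: For finite sets, a Markov kernel $k\colon X\to P(Z)$ is given by numbers $k(z\mid x)\ge0$ with $\sum_z k(z\mid x)=1$. A machine $(Y,S,\gamma)$ consists of a state set $Y$, an input set $S$ and a Markov kernel $\gamma\colon Y\times S\to P(Y)$. Given $\psi_H\colon Y\to P(H)$ and $\kappa\colon H\to P(H\times S)$, define $\psi_{S,H'}(h,s\mid y)=\sum_{h_0\in H}\psi_H(h_0\mid y)\,\kappa(h,s\mid h_0)$ and $\psi_S(s\mid y)=\sum_{h\in H}\psi_{S,H'}(h,s\mid y)$. The triple $(H,\psi_H,\kappa)$ is a consistent Bayesian filtering interpretation of $\gamma$ if for all $y,y'\in Y$, $s\in S$, $h\in H$: $$\psi_{S,H'}(h,s\mid y)\,\gamma(y'\mid y,s)=\psi_S(s\mid y)\,\gamma(y'\mid y,s)\,\psi_H(h\mid y').$$ *)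

(* Defs.v *)
From mathcomp Require Import all_boot all_order all_algebra.
Set Implicit Arguments. Unset Strict Implicit. Unset Printing Implicit Defensive.
Import Order.TTheory GRing.Theory Num.Theory.
Local Open Scope ring_scope.

Definition markov_kernel (R : realFieldType) (X Z : finType) (k : X -> Z -> R) : Prop :=
  forall x, (forall z, 0 <= k x z) /\ \sum_(z : Z) k x z = 1.

Definition psiSH (R : realFieldType) (Y S H : finType)
  (psiH : Y -> H -> R) (kappa : H -> (H * S)%type -> R) (y : Y) (h : H) (s : S) : R :=
  \sum_(h0 : H) psiH y h0 * kappa h0 (h, s).

Definition psiS (R : realFieldType) (Y S H : finType)
  (psiH : Y -> H -> R) (kappa : H -> (H * S)%type -> R) (y : Y) (s : S) : R :=
  \sum_(h : H) psiSH psiH kappa y h s.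

(* (H, psiH, kappa) is a consistent Bayesian filtering interpretation of
   gamma : Y * S -> P(Y), where gamma (y, s) y' = gamma(y' | y, s). *)
Definition consistent_BFI (R : realFieldType) (Y S H : finType)
  (gamma : (Y * S)%type -> Y -> R)
  (psiH : Y -> H -> R) (kappa : H -> (H * S)%type -> R) : Prop :=
  markov_kernel psiH /\ markov_kernel kappa /\
  forall (y y' : Y) (s : S) (h : H),
    psiSH psiH kappa y h s * gamma (y, s) y'
    = psiS psiH kappa y s * gamma (y, s) y' * psiH y' h.

(* Main.v *)
Require Import Defs.
From mathcomp Require Import all_boot all_order all_algebra.
From Stdlib Require Import FunctionalExtensionality.
Import Order.TTheory GRing.Theory Num.Theory.
Local Open Scope ring_scope.

Theorem mainTheorem4 (R : realFieldType) (Y S : finType)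
  (gamma : (Y * S)%type -> Y -> R) :
  markov_kernel gamma ->
  (forall (y y' : Y) (s : S), 0 < gamma (y, s) y') ->
  forall (H : finType) (psiH : Y -> H -> R) (kappa : H -> (H * S)%type -> R),
    consistent_BFI gamma psiH kappa ->
    forall y y' : Y, psiH y = psiH y'.
Proof.
move=> _ gpos H psiH kappa [mpsi [mkap cons]] y0 y1.
have key : forall y' h, psiH y' h = \sum_(s : S) psiSH psiH kappa y0 h s.
  move=> y' h.
  have E : forall s, psiSH psiH kappa y0 h s = psiS psiH kappa y0 s * psiH y' h.
    move=> s; have := cons y0 y' s h.
    rewrite -mulrA [gamma _ _ * _]mulrC mulrA => /mulIf; apply.
    by rewrite gt_eqF // gpos.
  under eq_bigr do rewrite E.
  rewrite -mulr_suml.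
  suff -> : \sum_(s : S) psiS psiH kappa y0 s = 1 by rewrite mul1r.
  rewrite /psiS /psiSH.
  under eq_bigr do rewrite exchange_big /=.
  rewrite exchange_big /=.
  under eq_bigr do (under eq_bigr do rewrite -mulr_sumr).
  rewrite -(proj2 (mpsi y0)); apply: eq_bigr => h0 _ /=.
  rewrite -mulr_sumr -[RHS]mulr1; congr (_ * _)%R.
  rewrite -(proj2 (mkap h0)).
  rewrite [RHS](eq_bigr (fun p => kappa h0 (p.1, p.2))); last by case.
  by rewrite -(pair_bigA _ (fun a b => kappa h0 (a, b))) exchange_big.
apply: functional_extensionality => h.
by rewrite !key.
Qed.
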